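(* Let $A\in\mathrm{GL}(n,2)$ have columns $\mathbf{a}_1,\dots,\mathbf{a}_n$, and let $\rho$ be an $n$-qubit density matrix. Define $$F_{\max}(A;\rho):=\max\{\,p(\mathbf{0}) : p\in\Delta(\mathbb{F}_2^n),\ \widehat p(\mathbf{a}_i)=\mu_\rho(\mathbf{a}_i)\ \forall i\in\{1,\dots,n\}\,\}.$$ Then $$F_{\max}(A;\rho)=\frac12+\frac12\min_{i\in\{1,\dots,n\}}\mu_\rho(\mathbf{a}_i).$$
   Context: Setting: $|\psi\rangle$ is an $n$-qubit stabilizer state whose stabilizer group is generated by independent commuting Pauli operators $g_1,\dots,g_n$. For $\mathbf{u}\in\mathbb{F}_2^n$ put $g(\mathbf{u})=\prod_j g_j^{u_j}$. For $\mathbf{s}\in\mathbb{F}_2^n$, the syndrome projectors $\Pi_{\mathbf{s}}=2^{-n}\prod_{j=1}^n(I+(-1)^{s_j}g_j)$ are mutually orthogonal rank-one projectors summing to the identity, with $\Pi_{\mathbf{0}}=|\psi\rangle\langle\psi|$. For a state $\rho$, its syndrome distribution is $p_\rho(\mathbf{s})=\mathrm{tr}(\rho\Pi_{\mathbf{s}})$ and $\mu_\rho(\mathbf{u}):=\mathrm{tr}(\rho\, g(\mathbf{u}))=\widehat{p_\rho}(\mathbf{u})$, where for $p\in\Delta(\mathbb{F}_2^n)$ (probability distributions on $\mathbb{F}_2^n$) the Walsh transform is $\widehat p(\mathbf{u})=\sum_{\mathbf{s}}(-1)^{\mathbf{u}\cdot\mathbf{s}}p(\mathbf{s})$ with $\mathbf{u}\cdot\mathbf{s}$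 the mod-2 inner product. $\mathrm{GL}(n,2)$ is the group of invertible binary $n\times n$ matrices (a ''gauge''); querying gauge $A$ yields the exact values $\mu_\rho(\mathbf{a}_1),\dots,\mu_\rho(\mathbf{a}_n)$. *)

(* Defs.v *)
From HB Require Import structures.
From mathcomp Require Import all_boot all_order all_algebra.
Set Implicit Arguments. Unset Strict Implicit. Unset Printing Implicit Defensive.
Import Order.TTheory GRing.Theory Num.Theory.
Local Open Scope ring_scope.

Definition dot2 (n : nat) (u s : 'rV['F_2]_n) : 'F_2 := (u *m s^T) 0 0.

Definition sgn2 (C : pzRingType) (n : nat) (u s : 'rV['F_2]_n) : C :=
  if dot2 u s == 0 then 1 else -1.

Definition walsh (C : pzRingType) (n : nat) (p : {ffun 'rV['F_2]_n -> C})
  (u : 'rV['F_2]_n) : C :=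
  \sum_(s : 'rV['F_2]_n) sgn2 C u s * p s.

(* probability distributions on F_2^n (values in the real part of C) *)
Definition is_distr (C : numClosedFieldType) (n : nat)
  (p : {ffun 'rV['F_2]_n -> C}) : Prop :=
  (forall s, 0 <= p s) /\ \sum_(s : 'rV['F_2]_n) p s = 1.

Definition adjmx (C : numClosedFieldType) (m k : nat) (M : 'M[C]_(m, k))
  : 'M[C]_(k, m) := (map_mx Num.conj M)^T.

Definition hermitian (C : numClosedFieldType) (N : nat) (M : 'M[C]_N) : Prop :=
  adjmx M = M.

Definition density (C : numClosedFieldType) (N : nat) (rho : 'M[C]_N) : Prop :=
  [/\ hermitian rho,
      forall v : 'cV[C]_N, 0 <= (adjmx v *m rho *m v) 0 0
    & \tr rho = 1].

Definition mxprod (C : pzRingType) (N n : nat) (F : 'I_n -> 'M[C]_N) : 'M[C]_N :=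
  foldr (fun j M => F j *m M) 1%:M (enum 'I_n).

Definition gpow (C : pzRingType) (N n : nat) (g : 'I_n -> 'M[C]_N)
  (u : 'rV['F_2]_n) : 'M[C]_N :=
  mxprod (fun j => if u 0 j == 0 then 1%:M else g j).

Definition syndrome_proj (C : numFieldType) (N n : nat) (g : 'I_n -> 'M[C]_N)
  (s : 'rV['F_2]_n) : 'M[C]_N :=
  (2 ^- n) *: mxprod (fun j => 1%:M + (if s 0 j == 0 then 1 else -1) *: g j).

(* Abstract stabilizer generators of an n-qubit stabilizer state:
   Hermitian involutions, pairwise commuting, whose syndrome projectors
   are rank-one (this encodes independence and n generators on 2^n dims). *)
Definition stabilizer_generators (C : numClosedFieldType) (n : nat)
  (g : 'I_n -> 'M[C]_(2 ^ n)) : Prop :=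
  [/\ forall j, hermitian (g j),
      forall j, g j *m g j = 1%:M,
      forall j k, g j *m g k = g k *m g j
    & forall s, \rank (syndrome_proj g s) = 1%N].

Definition mu (C : numClosedFieldType) (n : nat) (g : 'I_n -> 'M[C]_(2 ^ n))
  (rho : 'M[C]_(2 ^ n)) (u : 'rV['F_2]_n) : C :=
  \tr (rho *m gpow g u).

Definition acol (n : nat) (A : 'M['F_2]_n) (i : 'I_n) : 'rV['F_2]_n :=
  (col i A)^T.

Definition feasible (C : numClosedFieldType) (n : nat) (g : 'I_n -> 'M[C]_(2 ^ n))
  (rho : 'M[C]_(2 ^ n)) (A : 'M['F_2]_n) (p : {ffun 'rV['F_2]_n -> C}) : Prop :=
  is_distr p /\ forall i : 'I_n, walsh p (acol A i) = mu g rho (acol A i).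

Definition is_Fmax (C : numClosedFieldType) (n : nat) (g : 'I_n -> 'M[C]_(2 ^ n))
  (rho : 'M[C]_(2 ^ n)) (A : 'M['F_2]_n) (v : C) : Prop :=
  (exists2 p, feasible g rho A p & p 0 = v) /\
  (forall p, feasible g rho A p -> p 0 <= v).

Definition is_min_of (C : numClosedFieldType) (n : nat) (f : 'I_n -> C) (m : C)
  : Prop :=
  (exists i, f i = m) /\ (forall i, m <= f i).

(* Main.v *)
Require Import Defs.
From HB Require Import structures.
From mathcomp Require Import all_boot all_order all_algebra.
From mathcomp Require Import ring.
Import Order.TTheory GRing.Theory Num.Theory.
Local Open Scope ring_scope.

Lemma sumF2 (C : nmodType) (F : 'F_2 -> C) : \sum_(j : 'F_2) F j = F 0 + F 1.
Proof.
rewrite (@big_ord_recl _ _ _ 1 F) big_ord1.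
congr (F _ + F _); exact: val_inj.
Qed.

Lemma sum_prod_rV (C : comPzRingType) n (f : 'I_n -> 'F_2 -> C) :
  \sum_(t : 'rV['F_2]_n) \prod_k f k (t 0 k) = \prod_k (f k 0 + f k 1).
Proof.
rewrite -(eq_bigr _ (fun k _ => @sumF2 _ (f k))) bigA_distr_bigA /=.
rewrite (reindex (fun t : 'rV['F_2]_n => [ffun k => t 0 k])) /=.
  by apply: eq_bigr => t _; apply: eq_bigr => k _; rewrite ffunE.
exists (fun f : {ffun 'I_n -> 'F_2} => \row_k f k) => t _.
  by apply/rowP => k; rewrite !mxE ffunE.
by apply/ffunP => k; rewrite !ffunE mxE.
Qed.

Section Q.
Variable C : numClosedFieldType.

Lemma adjmxM m k l (A : 'M[C]_(m,k)) (B : 'M[C]_(k,l)) :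
  adjmx (A *m B) = adjmx B *m adjmx A.
Proof. by rewrite /adjmx map_mxM trmx_mul. Qed.

Lemma adjmx1 N : adjmx (1%:M : 'M[C]_N) = 1%:M.
Proof. by rewrite /adjmx map_scalar_mx rmorph1 tr_scalar_mx. Qed.

Lemma adjmxN N (A : 'M[C]_N) : adjmx (- A) = - adjmx A.
Proof. by rewrite /adjmx map_mxN linearN. Qed.

Lemma trace_psd N (M : 'M[C]_N) :
  (forall v : 'cV[C]_N, 0 <= (adjmx v *m M *m v) 0 0) -> 0 <= \tr M.
Proof.
move=> H; rewrite /mxtrace; apply: sumr_ge0 => i _.
have := H (delta_mx i 0).
have -> : adjmx (delta_mx i 0 : 'cV[C]_N) = delta_mx 0 i.
  apply/matrixP => a b; rewrite !mxE.
  by case: (b == i); case: (a == 0); rewrite /= ?conjC1 ?conjC0.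
by rewrite -(rowE i M) -colE !mxE.
Qed.

Lemma herm_bound N (H rho : 'M[C]_N) :
  adjmx H = H -> H *m H = 1%:M -> density rho -> 0 <= 1 + \tr (rho *m H).
Proof.
move=> aH HH [_ psd tr1].
set P := 1%:M + H.
have PP : P *m P = P *+ 2.
  rewrite /P mulmxDl !mulmxDr HH mul1mx mulmx1 mul1mx mulr2n.
  by rewrite [H + _]addrC.
have aP : adjmx P = P.
  by rewrite /P /adjmx map_mxD linearD /= -/(adjmx _) -/(adjmx H) adjmx1 aH.
have trP : \tr (rho *m P) = 1 + \tr (rho *m H).
  by rewrite /P mulmxDr mulmx1 mxtraceD tr1.
have : 0 <= \tr (adjmx P *m rho *m P).
  apply: trace_psd => v.
  have -> : adjmx v *m (adjmx P *m rho *m P) *m v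
           = adjmx (P *m v) *m rho *m (P *m v) by rewrite adjmxM !mulmxA.
  exact: psd.
rewrite aP -mulmxA mxtrace_mulC -mulmxA PP.
by rewrite mulr2n mulmxDr mxtraceD trP -mulr2n pmulrn_lge0.
Qed.


Lemma foldr_props (I : Type) N (F : I -> 'M[C]_N) (l : seq I) :
  (forall j, adjmx (F j) = F j) -> (forall j, F j *m F j = 1%:M) ->
  (forall j k, F j *m F k = F k *m F j) ->
  let M := foldr (fun j M => F j *m M) 1%:M l in
  [/\ adjmx M = M, M *m M = 1%:M & forall k, F k *m M = M *m F k].
Proof.
move=> FH FI FF; elim: l => [|j l IH] /=.
  by split; [exact: adjmx1 | exact: mul1mx | move=> k; rewrite mul1mx mulmx1].
case: IH => h1 h2 h3; split.
- by rewrite adjmxM h1 FH h3.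
- by rewrite mulmxA -[F j *m _ *m F j]mulmxA -h3 !mulmxA FI mul1mx h2.
- by move=> k; rewrite mulmxA (FF k j) -mulmxA h3 mulmxA.
Qed.

Lemma gpow_props n (g : 'I_n -> 'M[C]_(2 ^ n)) (u : 'rV['F_2]_n) :
  (forall j : 'I_n, Defs.hermitian (g j)) -> (forall j : 'I_n, g j *m g j = 1%:M) ->
  (forall j k : 'I_n, g j *m g k = g k *m g j) ->
  adjmx (gpow g u) = gpow g u /\ gpow g u *m gpow g u = 1%:M.
Proof.
move=> gH gI gC.
have [] := @foldr_props _ _ (fun j : 'I_n => if u 0 j == 0 then 1%:M else g j) (enum 'I_n).
- by move=> j; case: ifP => _; rewrite ?adjmx1 ?gH.
- by move=> j; case: ifP => _; rewrite ?mul1mx ?gI.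
- by move=> j k; do 2 case: ifP => _; rewrite ?mul1mx ?mulmx1 // gC.
by move=> h1 h2 _; split.
Qed.

Lemma mu_bounds n (g : 'I_n -> 'M[C]_(2 ^ n)) rho (u : 'rV['F_2]_n) :
  (forall j : 'I_n, Defs.hermitian (g j)) -> (forall j : 'I_n, g j *m g j = 1%:M) ->
  (forall j k : 'I_n, g j *m g k = g k *m g j) -> density rho ->
  0 <= 1 + mu g rho u /\ 0 <= 1 - mu g rho u.
Proof.
move=> gH gI gC dr; have [h1 h2] := @gpow_props n g u gH gI gC.
split; first exact: herm_bound.
have := @herm_bound _ (- gpow g u) rho.
rewrite adjmxN h1 mulmxN mulNmx opprK h2 mulmxN linearN /=.
by apply.
Qed.
End Q.


Lemma dot2_acol n (A : 'M['F_2]_n) i s : dot2 (acol A i) s = (s *m A) 0 i.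
Proof.
by rewrite /dot2 /acol -trmx_mul mxE colE mulmxA -colE mxE.
Qed.

Lemma sum_mulA (C : nmodType) n (A : 'M['F_2]_n) (F : 'rV['F_2]_n -> C) :
  A \in unitmx -> \sum_s F (s *m A) = \sum_t F t.
Proof.
move=> Au; rewrite [RHS](reindex (fun s : 'rV['F_2]_n => s *m A)) //.
by exists (fun t => t *m invmx A) => s _; rewrite ?mulmxK ?mulmxKV.
Qed.

Theorem proposition2 (C : numClosedFieldType) (n : nat)
  (g : 'I_n -> 'M[C]_(2 ^ n)) (rho : 'M[C]_(2 ^ n)) (A : 'M['F_2]_n) :
  (0 < n)%N ->
  stabilizer_generators g ->
  density rho ->
  A \in unitmx ->
  forall m : C, is_min_of (fun i => mu g rho (acol A i)) m ->
  is_Fmax g rho A (2^-1 + 2^-1 * m).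
Proof.
move=> n0 [gH gI gC _] dens Au m [[i0 Hi0] Hm] /=.
set mu_ := fun i => mu g rho (acol A i).
have Hb : forall i, 0 <= 1 + mu_ i /\ 0 <= 1 - mu_ i.
  by move=> i; apply: mu_bounds.
have Hi0' : mu_ i0 = m by [].
have Hm' : forall i, m <= mu_ i by [].
have hm1 : 0 <= 1 - m by rewrite -Hi0'; case: (Hb i0).
have hm2 : 0 <= 1 + m by rewrite -Hi0'; case: (Hb i0).
split; last first.
  move=> p [[p0 p1] Hw].
  have Hw0 : walsh p (acol A i0) = m by rewrite Hw.
  have key : p 0 *+ 2 <= 1 + m.
    rewrite -Hw0 -p1 /walsh -big_split /= (bigD1 0) //=.
    have -> : sgn2 C (acol A i0) 0 = 1.
      by rewrite /sgn2 /dot2 trmx0 mulmx0 mxE eqxx.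
    rewrite mul1r -mulr2n lerDl; apply: sumr_ge0 => s _.
    rewrite /sgn2; case: ifP => _; rewrite ?mul1r ?mulN1r ?subrr //.
    by apply: addr_ge0.
  have -> : 2^-1 + 2^-1 * m = (1 + m) / 2 by field.
  by rewrite ler_pdivlMr ?ltr0n // mulr_natr.
set al := 2^-1 + 2^-1 * m.
pose be : C := 2^-1 * (1 - m).
pose y i := (1 - mu_ i) / (1 - m).
pose w (k : 'I_n) (b : 'F_2) : C := if b == 0 then 1 - y k else y k.
pose q (t : 'rV['F_2]_n) := (if t == 0 then al else 0) + be * \prod_k w k (t 0 k).
have hmu1 : 1 - m = 0 -> forall i, mu_ i = 1.
  move=> /eqP; rewrite subr_eq0 => /eqP m1 i; apply: le_anti.
  by rewrite -subr_ge0 (proj2 (Hb i)) /= {1}m1 Hm'.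
have hby : forall i, be * y i = 2^-1 * (1 - mu_ i).
  move=> i; have [e|ne] := eqVneq (1 - m) 0.
    by rewrite /y /be e invr0 !mulr0 hmu1 // subrr mulr0.
  by rewrite /y /be; field.
have hal : 0 <= al.
  by rewrite /al -{1}(mulr1 2^-1) -mulrDr mulr_ge0 // invr_ge0 ler0n.
have hbe : 0 <= be by rewrite mulr_ge0 // invr_ge0 ler0n.
have hy0 : forall i, 0 <= y i.
  by move=> i; rewrite divr_ge0 //; case: (Hb i).
have hy1 : forall i, y i <= 1.
  move=> i; have [e|ne] := eqVneq (1 - m) 0.
    by rewrite /y e invr0 mulr0 ler01.
  have lt : 0 < 1 - m by rewrite lt_def ne.
  by rewrite /y ler_pdivrMr // mul1r lerB.
have hw : forall k b, 0 <= w k b.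
  by move=> k b; rewrite /w; case: ifP => _; rewrite ?subr_ge0.
have habe : al + be = 1 by rewrite /al /be; field.
exists [ffun s => q (s *m A)]; last first.
  rewrite ffunE mul0mx /q eqxx.
  rewrite (bigD1 i0) //= mxE.
  have w0 : w i0 0 = 1 - y i0 by rewrite /w eqxx.
  rewrite w0 mulrA.
  have -> : be * (1 - y i0) = 0.
    have [e|ne] := eqVneq (1 - m) 0.
      by rewrite /be e mulr0 mul0r.
    by rewrite /y Hi0' divff // subrr mulr0.
  by rewrite mul0r addr0.
split.
  split.
    move=> s; rewrite ffunE /q; apply: addr_ge0.
      by case: ifP.
    by apply: mulr_ge0 => //; apply: prodr_ge0 => k _.
  rewrite (eq_bigr (fun s => q (s *m A))); last by move=> s _; rewrite ffunE.
  rewrite (@sum_mulA _ _ A q Au) /q big_split /= -big_mkcond big_pred1_eq.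
  rewrite -mulr_sumr sum_prod_rV.
  rewrite big1 ?mulr1 // => k _.
  by rewrite /w /= subrK.
move=> i; rewrite /walsh.
pose F := fun t : 'rV['F_2]_n => (if t 0 i == 0 then 1 else -1) * q t.
rewrite (eq_bigr (fun s : 'rV['F_2]_n => F (s *m A))); last first.
  by move=> s _; rewrite ffunE /sgn2 dot2_acol.
rewrite (@sum_mulA _ _ A F Au) /F /q.
under eq_bigr => t _ do rewrite mulrDr.
rewrite big_split /=.
rewrite (bigD1 0) //= eqxx mxE eqxx mul1r big1 ?addr0; last first.
  by move=> t /negbTE ->; rewrite mulr0.
pose f := fun (k : 'I_n) (b : 'F_2) => (if k == i then (if b == 0 then 1 else -1) else 1) * w k b.
rewrite (eq_bigr (fun t : 'rV['F_2]_n => be * \prod_k f k (t 0 k))); last first.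
  move=> t _; rewrite /f big_split /= -big_mkcond big_pred1_eq mulrCA //.
rewrite -mulr_sumr (@sum_prod_rV _ _ f).
rewrite (bigD1 i) //= big1 ?mulr1; last first.
  by move=> k /negbTE kn; rewrite /f kn !mul1r /w /= subrK.
rewrite /f eqxx /w /= mul1r mulN1r mulrDr mulrN mulrBr mulr1 !hby -/(mu_ i).
by rewrite /al /be; field.
Qed.
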